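(* Let $B$ be a finite-dimensional abelian Lie algebra over a field $\mathbb{K}$ of characteristic zero and let $w\colon B\times B\to B^*$ be a cyclic $2$-cocycle. Then $(T^*_wB)^2=\mathrm{span}\langle w(b,b'):b,b'\in B\rangle$ and $Z(T^*_wB)=\mathrm{rad}\,w\oplus B^*$. Hence $T^*_wB$ is $2$-step nilpotent if and only if $w\neq0$. Moreover the following are equivalent: (a) $(T^*_wB,q_B)$ is reduced; (b) $w$ is non-degenerate; (c) $B^*=\mathrm{span}\langle w(b,b'):b,b'\in B\rangle$.
   Context: For a bilinear map $w\colon B\times B\to B^*$: $\mathrm{rad}\,w=\{b\in B:w(b,\cdot)=0\}$ and $w$ is non-degenerate if $\mathrm{rad}\,w=0$; $w$ is cyclic if $w(a,b)(c)=w(c,a)(b)=w(b,c)(a)$; $w$ is a $2$-cocycle (coadjoint coefficients) if $w$ is skew-symmetric and $\sum_{\mathrm{cyc}}w([a,b],c)=\sum_{\mathrm{cyc}}\mathrm{ad}^*(a)w(b,c)$, $\mathrm{ad}^*(a)(\beta)(a')=-\beta([a,a'])$. The $T^*$-extension $T^*_wB$ is $B\oplus B^*$ with bracket $[b+\beta,b'+\beta']=[b,b']_B+w(b,b')+\mathrm{ad}^*(b)(\beta')-\mathrm{ad}^*(b')(\beta)$ (here, $B$ abelian, simply $w(b,b')$) and form $q_B(b+\beta,b'+\beta')=\beta(b')+\beta'(b)$. A Lie algebra $L$ is reduced if $Z(L)\subseteq[L,L]$; $2$-step nilpotent means $[L,[L,L]]=0\ne[L,L]$. *)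

(* Defs.v *)
From HB Require Import structures.
From mathcomp Require Import all_boot all_order all_algebra.
Set Implicit Arguments. Unset Strict Implicit. Unset Printing Implicit Defensive.
Import GRing.Theory.
Local Open Scope ring_scope.

Notation dual K B := ('Hom(B, K^o)) (only parsing).

Section TStar.
Variables (K : fieldType) (B : vectType K).

Definition adstar (br : B -> B -> B) (a : B) (beta : 'Hom(B, K^o)) : 'Hom(B, K^o) :=
  linfun (fun a' : B => - beta (br a a')).

Definition abel_br : B -> B -> B := fun _ _ => 0.

Definition bilinear_map (w : B -> B -> 'Hom(B, K^o)) :=
  (forall (k : K) a a' b, w (k *: a + a') b = k *: w a b + w a' b) /\
  (forall (k : K) a b b', w a (k *: b + b') = k *: w a b + w a b').

Definition rad_w (w : B -> B -> 'Hom(B, K^o)) (b : B) : Prop :=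
  forall b', w b b' = 0.

Definition nondeg_w (w : B -> B -> 'Hom(B, K^o)) : Prop :=
  forall b, rad_w w b -> b = 0.

Definition cyclic_form (w : B -> B -> 'Hom(B, K^o)) : Prop :=
  forall a b c, w a b c = w c a b /\ w c a b = w b c a.

Definition cocycle2 (br : B -> B -> B) (w : B -> B -> 'Hom(B, K^o)) : Prop :=
  (forall a b, w a b = - w b a) /\
  (forall a b c,
     w (br a b) c + w (br b c) a + w (br c a) b =
     adstar br a (w b c) + adstar br b (w c a) + adstar br c (w a b)).

Definition tstar_br (br : B -> B -> B) (w : B -> B -> 'Hom(B, K^o))
  (x y : (B * 'Hom(B, K^o))%type) : (B * 'Hom(B, K^o))%type :=
  (br x.1 y.1, w x.1 y.1 + adstar br x.1 y.2 - adstar br y.1 x.2).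

Definition qB (x y : (B * 'Hom(B, K^o))%type) : K := x.2 y.1 + y.2 x.1.

End TStar.

Definition in_span (K : fieldType) (V : vectType K) (S : V -> Prop) (x : V) : Prop :=
  exists s : seq V, (forall y, y \in s -> S y) /\ x \in <<s>>%VS.

Section LieNotions.
Variables (K : fieldType) (L : vectType K) (br : L -> L -> L).

Definition lie_derived (x : L) : Prop := in_span (fun z => exists u v, z = br u v) x.

Definition lie_center (x : L) : Prop := forall y, br x y = 0.

Definition lie_reduced : Prop := forall x, lie_center x -> lie_derived x.

Definition two_step_nilpotent : Prop :=
  (forall x, in_span (fun z => exists u v, z = br u v /\ lie_derived v) x -> x = 0)
  /\ exists x, lie_derived x /\ x <> 0.
End LieNotions.

(* Main.v *)
Require Import Defs.
From HB Require Import structures.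
From mathcomp Require Import all_boot all_order all_algebra.
Import GRing.Theory.
Local Open Scope ring_scope.
Set Implicit Arguments. Unset Strict Implicit.

Lemma adstar0 (K : fieldType) (B : vectType K) a (beta : 'Hom(B, K^o)) :
  adstar (@abel_br K B) a beta = 0.
Proof.
rewrite /adstar /abel_br linear0 oppr0; apply/lfunP => v.
by rewrite zero_lfunE.
Qed.

Section Ev.
Variables (K : fieldType) (B : vectType K) (s : seq 'Hom(B, K^o)).
Definition evr (b : B) : 'rV[K]_(size s) := \row_(j < size s) s`_j b.
Fact evr_lin : linear evr.
Proof. by move=> k x y; apply/rowP => j; rewrite !mxE linearP. Qed.
HB.instance Definition _ := GRing.isLinear.Build K B 'rV[K]_(size s) *:%R evr evr_lin.
End Ev.
Arguments evr {K B} s b.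

Lemma span_zero (K : fieldType) (V : vectType K) (s : seq V) x :
  (forall y, y \in s -> y = 0) -> x \in <<s>>%VS -> x = 0.
Proof.
move=> hs /(@coord_span _ _ _ (in_tuple s)) ->.
apply: big1 => i _; rewrite (hs _ (mem_nth 0 _)) ?scaler0 //.
Qed.

Lemma span_eval0 (K : fieldType) (B : vectType K) (s : seq 'Hom(B, K^o)) beta b :
  (forall y, y \in s -> y b = 0) -> beta \in <<s>>%VS -> beta b = 0.
Proof.
move=> hs /(@coord_span _ _ _ (in_tuple s)) ->.
rewrite sum_lfunE; apply: big1 => i _; rewrite scale_lfunE (hs _ (mem_nth 0 _)) ?scaler0 //.
Qed.

Lemma nz_functional (K : fieldType) (B : vectType K) (b : B) :
  b != 0 -> exists beta : 'Hom(B, K^o), beta b != 0.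
Proof.
move=> nb.
case: (pickP (fun i => coord (vbasis (fullv : {vspace B})) i b != 0)) => [i hi|h].
  by exists (linfun (coord (vbasis (fullv : {vspace B})) i : B -> K^o)); rewrite lfunE.
case/negP: nb; rewrite (coord_vbasis (memvf b)); apply/eqP; apply: big1 => i _.
by have := h i; rewrite /= => /negbFE/eqP ->; rewrite scale0r.
Qed.

Lemma fst_sum (K : fieldType) (B C : vectType K) n (F : 'I_n -> (B * C)%type) :
  (\sum_i F i).1 = \sum_i (F i).1.
Proof. by apply: (big_rec2 (fun x y => x.1 = y)) => // i x y _ <-. Qed.
Lemma snd_sum (K : fieldType) (B C : vectType K) n (F : 'I_n -> (B * C)%type) :
  (\sum_i F i).2 = \sum_i (F i).2.
Proof. by apply: (big_rec2 (fun x y => x.2 = y)) => // i x y _ <-. Qed.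

Section Main.
Variables (K : fieldType) (B : vectType K) (w : B -> B -> 'Hom(B, K^o)).
Hypothesis hw : bilinear_map w.
Hypothesis hc : cyclic_form w.

Lemma w0r a : w a 0 = 0.
Proof.
have h := hw.2 1 a 0 0; rewrite !scale1r !addr0 in h.
by move: (congr1 (fun z => z - w a 0) h); rewrite addrK subrr => /esym.
Qed.
Lemma w0l a : w 0 a = 0.
Proof.
have h := hw.1 1 0 0 a; rewrite !scale1r !addr0 in h.
by move: (congr1 (fun z => z - w 0 a) h); rewrite addrK subrr => /esym.
Qed.
Lemma w_sumr a n (F : 'I_n -> B) : w a (\sum_i F i) = \sum_i w a (F i).
Proof.
apply: (big_morph (w a)); last exact: w0r.
by move=> x y; have := hw.2 1 a x y; rewrite !scale1r.
Qed.
Lemma wZr a k b : w a (k *: b) = k *: w a b.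
Proof. by have := hw.2 k a b 0; rewrite addr0 w0r addr0. Qed.

Lemma main_span (nd : nondeg_w w) (beta : 'Hom(B, K^o)) :
  in_span (fun beta => exists b b', beta = w b b') beta.
Proof.
pose E := vbasis (fullv : {vspace B}).
pose s := [seq w x y | x <- (E : seq B), y <- (E : seq B)].
have ker b : evr s b = 0 -> b = 0.
  move=> hb; apply: nd => x.
  have sb y : y \in s -> y b = 0.
    move=> ys; rewrite -(nth_index 0 ys).
    by move/rowP: hb => /(_ (Ordinal (etrans (index_mem y s) ys))); rewrite !mxE.
  have wbe (i j : 'I_(\dim (fullv : {vspace B}))) : w b E`_i E`_j = 0.
    rewrite -(hc _ _ _).1; apply: sb; apply: allpairs_f; apply: mem_nth; by rewrite size_tuple.
  have wbE (i : 'I_(\dim (fullv : {vspace B}))) : w b E`_i = 0.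
    apply/lfunP => v; rewrite zero_lfunE (coord_vbasis (memvf v)) linear_sum.
    by apply: big1 => j _; rewrite linearZ /= -/E wbe scaler0.
  rewrite (coord_vbasis (memvf x)) w_sumr; apply: big1 => i _.
  by rewrite wZr -/E wbE scaler0.
have inj : injective (evr s).
  move=> x y e; apply/eqP; rewrite -subr_eq0; apply/eqP/ker.
  have h := @evr_lin _ _ s (-1) y x.
  by rewrite !scaleN1r e addNr addrC in h.
pose f : 'Hom(B, 'rV[K]_(size s)) := linfun (evr s).
have kf : lker f == 0%VS by apply/lker0P => x y; rewrite !lfunE; exact: inj.
have fK := lker0_lfunK kf.
exists s; split.
  by move=> y /allpairsP [[x1 x2] [_ _ ->]]; exists x1, x2.
pose h := (beta \o f^-1)%VF.
have -> : beta = \sum_(j < size s) h (delta_mx 0 j) *: s`_j.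
  apply/lfunP => b; rewrite sum_lfunE.
  have {1}-> : b = f^-1%VF (f b) by rewrite fK.
  have -> : beta (f^-1%VF (f b)) = h (f b) by rewrite comp_lfunE.
  rewrite [f b]lfunE /= (row_sum_delta (evr s b)) linear_sum.
  apply: eq_bigr => j _; rewrite linearZ /= scale_lfunE mxE /=.
  exact: mulrC.
apply: rpred_sum => j _; apply: rpredZ; apply: memv_span; apply: mem_nth.
exact: ltn_ord.
Qed.
End Main.

Unset Implicit Arguments.
Theorem corollary2p23 (K : fieldType) (B : vectType K)
  (w : B -> B -> 'Hom(B, K^o)) :
  [pchar K] =i pred0 ->
  bilinear_map w -> cyclic_form w -> cocycle2 (@abel_br K B) w ->
  let L := (B * 'Hom(B, K^o))%type in
  let br := tstar_br (@abel_br K B) w in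
  let W := fun beta : 'Hom(B, K^o) => exists b b', beta = w b b' in
  (forall x : L, lie_derived br x <-> x.1 = 0 /\ in_span W x.2) /\
  (forall x : L, lie_center br x <-> rad_w w x.1) /\
  (two_step_nilpotent br <-> exists b b', w b b' <> 0) /\
  ((lie_reduced br <-> nondeg_w w) /\
   (nondeg_w w <-> forall beta, in_span W beta)).
Proof.
move=> hchar hw hc hco L br W.
have brE (x y : L) : br x y = (0, w x.1 y.1).
  by rewrite /br /tstar_br !adstar0 addr0 subr0.
have der (x : L) : lie_derived br x <-> x.1 = 0 /\ in_span W x.2.
  split.
    case=> s [hs xs].
    have ex := @coord_span _ _ _ (in_tuple s) _ xs.
    have e1 y : y \in s -> y.1 = 0 /\ W y.2.
      by move/hs => [u [v ->]]; rewrite brE; split => //; exists u.1, v.1.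
    split.
      rewrite ex fst_sum; apply: big1 => i _.
      by rewrite /= (e1 _ (mem_nth 0 _)).1 ?scaler0.
    exists (map snd s); split.
      by move=> y /mapP [z zs ->]; exact: (e1 z zs).2.
    rewrite ex snd_sum; apply: rpred_sum => i _ /=; apply: rpredZ; apply: memv_span.
    by apply: map_f; apply: mem_nth.
  case=> x1 [s [hs xs]]; exists (map (fun b => ((0:B), b)) s); split.
    move=> y /mapP [z zs ->]; case: (hs z zs) => b [b' ->].
    by exists (b, 0), (b', 0); rewrite brE.
  have ex := @coord_span _ _ _ (in_tuple s) _ xs.
  have -> : x = \sum_i coord (in_tuple s) i x.2 *: ((0:B), (in_tuple s)`_i).
    move: x1 ex; clear xs; case: x => a c /= -> ex.
    apply: injective_projections; rewrite /= ?fst_sum ?snd_sum /=.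
      by rewrite big1 // => i _ /=; rewrite scaler0.
    by rewrite {1}ex; apply: eq_bigr.
  apply: rpred_sum => i _; apply: rpredZ; apply: memv_span.
  by apply: (map_f (fun b => ((0:B), b))); apply: mem_nth.
have cen (x : L) : lie_center br x <-> rad_w w x.1.
  split => h y.
    by have := h (y, 0); rewrite brE => /(congr1 snd).
  by rewrite brE h.
have p5 : nondeg_w w <-> forall beta, in_span W beta.
  split; first by move=> nd beta; exact: (main_span hw hc nd beta).
  move=> hs b rb; apply/eqP; apply: contraT => nb.
  case: (nz_functional nb) => beta nbeta.
  case: (hs beta) => s [sW bs].
  suff : beta b = 0 by move/eqP: nbeta.
  apply: (span_eval0 _ bs) => y /sW [a [c ->]].
  by rewrite (hc a c b).1 rb zero_lfunE.
split; first exact: der.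
split; first exact: cen.
split.
  split.
    case=> _ [x [/der [x1 [s [hs xs]]] nx]].
    case: (boolP (has (fun y => y != 0) s)).
      case/hasP => y ys ny; case: (hs y ys) => b [b' e]; exists b, b'.
      by rewrite -e; apply/eqP.
    move/hasPn => hz; exfalso; apply: nx.
    have x20 : x.2 = 0.
      by apply: (span_zero _ xs) => y ys; move/negPn/eqP: (hz y ys).
    by move: x1 x20; clear xs; case: x => a c /= -> ->.
  case=> b [b' nz]; split.
    move=> x [s [hs xs]]; apply: (span_zero _ xs) => y ys.
    case: (hs y ys) => u [v [-> /der [v1 _]]].
    by rewrite brE v1 w0r.
  exists (br (b, 0) (b', 0)); split.
    exists [:: br (b, 0) (b', 0)]; split; last exact: memv_span1.
    by move=> y; rewrite inE => /eqP ->; exists (b, 0), (b', 0).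
  by rewrite brE => /(congr1 snd) /=.
split; last exact: p5.
split.
  move=> red b rb.
  by have := red (b, 0) ((cen (b, 0)).2 rb); case/der.
move=> nd x cx; apply/der; split.
  by apply: nd; apply/cen.
exact: (p5.1 nd).
Qed.
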